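(* Let $(M,J)$ be a closed almost complex manifold. Then $J$ is $C^{\infty}$ pure if and only if $\pi^{1,1}\mathbf B\cap\mathbf Z^{1,1}=\mathbf B^{1,1}$, and this condition is equivalent to $\pi^{(2,0),(0,2)}\mathbf B\cap\mathbf Z^{(2,0),(0,2)}=\mathbf B^{(2,0),(0,2)}$. Consequently, $J$ being $C^{\infty}$ pure is equivalent to $\iota^{1,1}$ being injective, which is also equivalent to $\iota^{(2,0),(0,2)}$ being injective.
   Context: Real 2-forms split as $J$-invariant ($\alpha(Jv,Jw)=\alpha(v,w)$, the space $\Omega^{1,1}$) plus $J$-anti-invariant ($\alpha(Jv,Jw)=-\alpha(v,w)$, the space $\Omega^{(2,0),(0,2)}$), with projections $\pi^{1,1},\pi^{(2,0),(0,2)}$. $\mathbf Z,\mathbf B$ are the closed and exact real 2-forms; for $S=(1,1)$ or $(2,0),(0,2)$, $\mathbf Z^S=\mathbf Z\cap\Omega^S$, $\mathbf B^S=\mathbf B\cap\Omega^S$. $\iota^{S}:\mathbf Z^S/\mathbf B^S\to\pi^S\mathbf Z/\pi^S\mathbf B$ is the homomorphism induced by inclusion. $H_J^{S}(M)_{\mathbb R}=\mathbf Z^S/\mathbf B^S$, viewed as a subspace of $H^2(M;\mathbb R)$. $J$ is $C^\infty$ pure if $H_J^{1,1}(M)_{\mathbb R}\cap H_J^{(2,0),(0,2)}(M)_{\mathbb R}=0$ in $H^2(M;\mathbb R)$. *)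

(* Defs.v *)
(* Abstract model of the degree-2 part of the real de Rham
   complex of an almost complex manifold. *)
From HB Require Import structures.
From mathcomp Require Import all_boot all_order all_algebra.
Set Implicit Arguments. Unset Strict Implicit. Unset Printing Implicit Defensive.
Import Order.TTheory GRing.Theory Num.Theory.
Local Open Scope ring_scope.

Section AlmostComplexDeRham.
Variable R : realFieldType.
(* V1 = real 1-forms, V2 = real 2-forms, V3 = real 3-forms *)
Variables (V1 V2 V3 : lmodType R).
(* d1 : Omega^1 -> Omega^2, d2 : Omega^2 -> Omega^3 exterior derivatives *)
Variables (d1 : {linear V1 -> V2}) (d2 : {linear V2 -> V3}).
(* sigma alpha := alpha(J.,J.)  (pullback of a 2-form by J) *)
Variable sigma : {linear V2 -> V2}.

Definition Om11 (a : V2) : Prop := sigma a = a.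
Definition Om20 (a : V2) : Prop := sigma a = - a.

Definition pi11 (a : V2) : V2 := 2^-1 *: (a + sigma a).
Definition pi20 (a : V2) : V2 := 2^-1 *: (a - sigma a).

Definition Zc (a : V2) : Prop := d2 a = 0.
Definition Bx (a : V2) : Prop := exists e : V1, a = d1 e.

Definition Z11 (a : V2) : Prop := Zc a /\ Om11 a.
Definition Z20 (a : V2) : Prop := Zc a /\ Om20 a.
Definition B11 (a : V2) : Prop := Bx a /\ Om11 a.
Definition B20 (a : V2) : Prop := Bx a /\ Om20 a.

Definition piB11 (a : V2) : Prop := exists b, Bx b /\ a = pi11 b.
Definition piB20 (a : V2) : Prop := exists b, Bx b /\ a = pi20 b.

(* J is C^infty pure: H^{1,1}_J intersect H^{(2,0),(0,2)}_J = 0 in H^2 = Z/B,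
   i.e. a class represented both by a in Z^{1,1} and by b in Z^{(2,0),(0,2)}
   is zero. *)
Definition Cinf_pure : Prop :=
  forall a b : V2, Z11 a -> Z20 b -> Bx (a - b) -> Bx a.

(* iota^S : Z^S/B^S -> pi^S Z / pi^S B induced by inclusion is injective:
   [z1] = [z2] in the target (z1 - z2 in pi^S B) implies [z1] = [z2] in the
   source (z1 - z2 in B^S). *)
Definition iota11_injective : Prop :=
  forall z1 z2 : V2, Z11 z1 -> Z11 z2 -> piB11 (z1 - z2) -> B11 (z1 - z2).
Definition iota20_injective : Prop :=
  forall z1 z2 : V2, Z20 z1 -> Z20 z2 -> piB20 (z1 - z2) -> B20 (z1 - z2).

End AlmostComplexDeRham.

(* Main.v *)
Require Import Defs.
From HB Require Import structures.
From mathcomp Require Import all_boot all_order all_algebra.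
From Stdlib Require Import FunctionalExtensionality PropExtensionality.
Import Order.TTheory GRing.Theory Num.Theory.
Local Open Scope ring_scope.

Section Aux.
Variable R : realFieldType.
Variables (V1 V2 V3 : lmodType R).
Variables (d1 : {linear V1 -> V2}) (d2 : {linear V2 -> V3}).
Variable sigma : {linear V2 -> V2}.
Hypothesis dd0 : forall e : V1, d2 (d1 e) = 0.
Hypothesis sigma_invol : forall a : V2, sigma (sigma a) = a.

Lemma half2 (a : V2) : 2^-1 *: (a + a) = a.
Proof.
rewrite -mulr2n -scaler_nat scalerA mulVf ?scale1r //.
by rewrite pnatr_eq0.
Qed.

Lemma BxD x y : Bx d1 x -> Bx d1 y -> Bx d1 (x + y).
Proof. by move=> [e ->] [f ->]; exists (e + f); rewrite linearD. Qed.
Lemma BxN x : Bx d1 x -> Bx d1 (- x).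
Proof. by move=> [e ->]; exists (- e); rewrite linearN. Qed.
Lemma BxB x y : Bx d1 x -> Bx d1 y -> Bx d1 (x - y).
Proof. by move=> hx hy; apply: BxD => //; apply: BxN. Qed.
Lemma Bx0 : Bx d1 0.
Proof. by exists 0; rewrite linear0. Qed.
Lemma BxZ {x} : Bx d1 x -> Zc d2 x.
Proof. by move=> [e ->]; rewrite /Zc dd0. Qed.

Lemma pi_split b : pi11 sigma b + pi20 sigma b = b.
Proof.
rewrite /pi11 /pi20 -scalerDr.
have -> : b + sigma b + (b - sigma b) = b + b.
  by rewrite addrACA subrr addr0.
exact: half2.
Qed.

Lemma pi11_inv b : Om11 sigma (pi11 sigma b).
Proof. by rewrite /Om11 /pi11 linearZ linearD sigma_invol addrC. Qed.
Lemma pi20_anti b : Om20 sigma (pi20 sigma b).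
Proof.
by rewrite /Om20 /pi20 linearZ linearB sigma_invol -scalerN opprB.
Qed.

Lemma pi11B x y : pi11 sigma (x - y) = pi11 sigma x - pi11 sigma y.
Proof. by rewrite /pi11 -scalerBr linearB; apply: f_equal; rewrite opprD addrACA. Qed.
Lemma pi20B x y : pi20 sigma (x - y) = pi20 sigma x - pi20 sigma y.
Proof. rewrite /pi20 [sigma (x - y)]linearB. have -> : x - y - (sigma x - sigma y) = (x - sigma x) - (y - sigma y). by rewrite !opprD !opprK addrACA. by rewrite scalerBr. Qed.

Lemma pi11_11 {a} : Om11 sigma a -> pi11 sigma a = a.
Proof. by rewrite /Om11 /pi11 => ->; apply: half2. Qed.
Lemma pi11_20 {a} : Om20 sigma a -> pi11 sigma a = 0.
Proof. by rewrite /Om20 /pi11 => ->; rewrite subrr scaler0. Qed.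
Lemma pi20_20 {a} : Om20 sigma a -> pi20 sigma a = a.
Proof. by rewrite /Om20 /pi20 => ->; rewrite opprK; apply: half2. Qed.
Lemma pi20_11 {a} : Om11 sigma a -> pi20 sigma a = 0.
Proof. by rewrite /Om11 /pi20 => ->; rewrite subrr scaler0. Qed.

Definition E11' := forall a, Z11 d2 sigma a -> piB11 d1 sigma a -> Bx d1 a.
Definition E20' := forall a, Z20 d2 sigma a -> piB20 d1 sigma a -> Bx d1 a.

Lemma Z11B {a b} : Z11 d2 sigma a -> Z11 d2 sigma b -> Z11 d2 sigma (a - b).
Proof.
move=> [za sa] [zb sb]; split; first by rewrite /Zc linearB za zb subrr.
by rewrite /Om11 linearB sa sb.
Qed.
Lemma Z20B {a b} : Z20 d2 sigma a -> Z20 d2 sigma b -> Z20 d2 sigma (a - b).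
Proof.
move=> [za sa] [zb sb]; split; first by rewrite /Zc linearB za zb subrr.
by rewrite /Om20 linearB sa sb opprB addrC opprK.
Qed.
Lemma Z20N {b} : Z20 d2 sigma b -> Z20 d2 sigma (- b).
Proof.
move=> [zb sb]; split; first by rewrite /Zc linearN zb oppr0.
by rewrite /Om20 linearN sb.
Qed.

Lemma pure_E11 : Cinf_pure d1 d2 sigma <-> E11'.
Proof.
split.
- move=> P a [za sa] [b [hb ea]].
  have hc : Z20 d2 sigma (- pi20 sigma b).
    apply: Z20N; split; last exact: pi20_anti.
    have -> : pi20 sigma b = b - a by rewrite ea -{2}(pi_split b) addrAC subrr add0r.
    by rewrite /Zc linearB (BxZ hb) za subrr.
  apply: (P a _ (conj za sa) hc).
  by rewrite opprK ea pi_split.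
- move=> E a b ha hb hab; apply: E => //.
  exists (a - b); split => //.
  by case: ha => _ ha; case: hb => _ hb; rewrite pi11B (pi11_11 ha) (pi11_20 hb) subr0.
Qed.

Lemma pure_E20 : Cinf_pure d1 d2 sigma <-> E20'.
Proof.
split.
- move=> P a [za sa] [b [hb ea]].
  have hc : Z11 d2 sigma (pi11 sigma b).
    split; last exact: pi11_inv.
    have -> : pi11 sigma b = b - a by rewrite ea -{2}(pi_split b) addrK.
    by rewrite /Zc linearB (BxZ hb) za subrr.
  have hbc : Bx d1 (pi11 sigma b).
    apply: (P _ (- a) hc (Z20N (conj za sa))).
    by rewrite opprK ea pi_split.
  have -> : a = b - pi11 sigma b by rewrite ea -{2}(pi_split b) addrAC subrr add0r.
  exact: BxB.
- move=> E a b ha hb hab.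
  have hnb : Bx d1 (- b).
    apply: E; first exact: Z20N.
    exists (a - b); split => //.
    by case: ha => _ ha; case: hb => _ hb; rewrite pi20B (pi20_20 hb) (pi20_11 ha) sub0r.
  have -> : a = (a - b) - (- b) by rewrite opprK subrK.
  exact: BxB.
Qed.

Lemma E11_eq : (fun a => piB11 d1 sigma a /\ Z11 d2 sigma a) = B11 d1 sigma <-> E11'.
Proof.
split.
- move=> E a za pa.
  have : B11 d1 sigma a by rewrite -E.
  by case.
- move=> E; apply: functional_extensionality => a.
  apply: propositional_extensionality; split.
  + move=> [pa za]; split; [exact: E | by case: za].
  + move=> [ba sa]; split; first by exists a; split => //; rewrite pi11_11.
    by split => //; apply: BxZ.
Qed.

Lemma E20_eq : (fun a => piB20 d1 sigma a /\ Z20 d2 sigma a) = B20 d1 sigma <-> E20'.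
Proof.
split.
- move=> E a za pa.
  have : B20 d1 sigma a by rewrite -E.
  by case.
- move=> E; apply: functional_extensionality => a.
  apply: propositional_extensionality; split.
  + move=> [pa za]; split; [exact: E | by case: za].
  + move=> [ba sa]; split; first by exists a; split => //; rewrite pi20_20.
    by split => //; apply: BxZ.
Qed.

Lemma iota11_E : iota11_injective d1 d2 sigma <-> E11'.
Proof.
split.
- move=> I a za pa.
  have z0 : Z11 d2 sigma 0 by split; rewrite /Zc /Om11 linear0.
  have := I a 0 za z0; rewrite subr0 => h; by case: (h pa).
- move=> E z1 z2 h1 h2 p; have z := Z11B h1 h2.
  split; [exact: E | by case: z].
Qed.

Lemma iota20_E : iota20_injective d1 d2 sigma <-> E20'.
Proof.
split.
- move=> I a za pa.
  have z0 : Z20 d2 sigma 0 by split; rewrite /Zc /Om20 linear0 ?oppr0.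
  have := I a 0 za z0; rewrite subr0 => h; by case: (h pa).
- move=> E z1 z2 h1 h2 p; have z := Z20B h1 h2.
  split; [exact: E | by case: z].
Qed.

End Aux.

Theorem lemma2p9 (R : realFieldType) (V1 V2 V3 : lmodType R)
  (d1 : {linear V1 -> V2}) (d2 : {linear V2 -> V3})
  (sigma : {linear V2 -> V2})
  (dd0 : forall e : V1, d2 (d1 e) = 0)
  (sigma_invol : forall a : V2, sigma (sigma a) = a) :
  let pure := Cinf_pure d1 d2 sigma in
  let E11 := (fun a => piB11 d1 sigma a /\ Z11 d2 sigma a) = B11 d1 sigma in
  let E20 := (fun a => piB20 d1 sigma a /\ Z20 d2 sigma a) = B20 d1 sigma in
  [/\ pure <-> E11, E11 <-> E20,
      pure <-> iota11_injective d1 d2 sigma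
    & iota11_injective d1 d2 sigma <-> iota20_injective d1 d2 sigma].
Proof.
move=> pure E11 E20.
have p1 := @pure_E11 R V1 V2 V3 d1 d2 sigma dd0 sigma_invol.
have p2 := @pure_E20 R V1 V2 V3 d1 d2 sigma dd0 sigma_invol.
have e1 := @E11_eq R V1 V2 V3 d1 d2 sigma dd0.
have e2 := @E20_eq R V1 V2 V3 d1 d2 sigma dd0.
have i1 := @iota11_E R V1 V2 V3 d1 d2 sigma.
have i2 := @iota20_E R V1 V2 V3 d1 d2 sigma.
rewrite /pure /E11 /E20.
split; tauto.
Qed.
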